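(* For every environment $\mu$, $$\sum_{a\in Z(\mu)}\beta(a)=|\mathcal A|.$$
   Context: Game tree: $V$ is the node set of a finite rooted tree with root $r$ and leaf set $L$; $C(v)$ denotes the set of children of $v$ and $p(v)$ the parent of $v\ne r$. The internal nodes are partitioned into infosets $N$ and actions $\mathcal A$ with $r\in N$, $C(v)\subseteq\mathcal A$ and $|C(v)|>1$ for $v\in N$, and $C(a)\subseteq N\cup L$ for $a\in\mathcal A$. An environment is a map $\mu:\mathcal A\to V$ with $\mu(a)\in C(a)$ for all $a$. For an environment $\mu$, $V(\mu)$ is the smallest subset of $V$ containing $r$, containing $C(v)$ for each $v\in N\cap V(\mu)$, and containing $\mu(a)$ for each $a\in\mathcal A\cap V(\mu)$. $Z(\mu)$ is the set of all $a\in\mathcal A\cap V(\mu)$ with $\mu(a)\in L$. Define $m:N\cup\mathcal A\to\mathbb N$ recursively from the bottom by $m(a)=1+\sum_{v\in C(a)\cap N}m(v)$ for $a\in\mathcal A$ and $m(v)=\sum_{a\in C(v)}m(a)$ for $v\in N$. Define $\beta$ from the top by $\beta(r)=1$, $\beta(a)=m(a)\beta(p(a))$ for $a\in\mathcal A$, $\beta(v)=\beta(p(v))/m(v)$ for $v\in N\setminus\{r\}$. *)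

(* Defs.v *)
From mathcomp Require Import all_boot all_order all_algebra.
Set Implicit Arguments. Unset Strict Implicit. Unset Printing Implicit Defensive.
Import GRing.Theory Num.Theory.
Local Open Scope ring_scope.

(* A finite rooted tree on the finite node type V, given by its root r and a
   parent function par (with par r = r, and every node reaching r by iterating
   par).  isAct marks the action nodes; infosets are the internal non-action
   nodes, leaves are the nodes without children. *)
Section GameTree.
Variables (V : finType) (r : V) (par : V -> V) (isAct : pred V).

Definition children (v : V) : {set V} := [set w | (w != r) && (par w == v)].
Definition leaf (v : V) : bool := children v == set0.
Definition internal (v : V) : bool := children v != set0.
Definition infoset (v : V) : bool := internal v && ~~ isAct v.
Definition actions : {set V} := [set a | isAct a].

Definition is_game_tree : Prop :=
  [/\ par r = r,
      (forall v : V, exists k, iter k par v = r),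
      infoset r,
      (forall a, isAct a -> internal a) &
      (forall v, infoset v -> (children v \subset actions) /\ (1 < #|children v|)%N)] /\
  (forall a, isAct a -> forall w, w \in children a -> ~~ isAct w).

Definition is_env (mu : V -> V) : Prop :=
  forall a, isAct a -> mu a \in children a.

Definition env_closed (mu : V -> V) (S : {set V}) : bool :=
  [&& r \in S,
      [forall v, ((v \in S) && infoset v) ==> (children v \subset S)] &
      [forall a, ((a \in S) && isAct a) ==> (mu a \in S)]].

Definition Vmu (mu : V -> V) : {set V} := \bigcap_(S | env_closed mu S) S.

Definition Zmu (mu : V -> V) : {set V} :=
  [set a in Vmu mu | isAct a && leaf (mu a)].

(* m, defined by recursion from the bottom (fuel #|V| exceeds every height) *)
Fixpoint m_aux (k : nat) (v : V) : nat :=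
  match k with
  | 0 => 0
  | k'.+1 =>
      if isAct v then (1 + \sum_(w in children v | infoset w) m_aux k' w)%N
      else (\sum_(w in children v) m_aux k' w)%N
  end.
Definition m (v : V) : nat := m_aux #|V| v.

(* beta, defined by recursion from the top (fuel #|V| exceeds every depth) *)
Fixpoint beta_aux (k : nat) (v : V) : rat :=
  match k with
  | 0 => 1
  | k'.+1 =>
      if v == r then 1
      else if isAct v then (m v)%:R * beta_aux k' (par v)
      else beta_aux k' (par v) / (m v)%:R
  end.
Definition beta (v : V) : rat := beta_aux #|V| v.

End GameTree.

(* Main.v *)
Require Import Defs.
From mathcomp Require Import all_boot all_order all_algebra.
From mathcomp Require Import zify.
Import GRing.Theory Num.Theory.
Local Open Scope ring_scope.

Theorem mainTheorem5 (V : finType) (r : V) (par : V -> V) (isAct : pred V)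
    (mu : V -> V) :
  is_game_tree r par isAct ->
  is_env r par isAct mu ->
  \sum_(a in Zmu r par isAct mu) beta r par isAct a = #|actions isAct|%:R.
Proof.
move=> [[hpr hreach hrinf hactint hinf] hactch] henv.
have hexb v : exists k, iter k par v == r.
  by have [k hk] := hreach v; exists k; apply/eqP.
pose d v := ex_minn (hexb v).
have dP v : iter (d v) par v = r.
  by rewrite /d; case: ex_minnP => k /eqP.
have dmin v k : iter k par v = r -> (d v <= k)%N.
  by move=> hk; rewrite /d; case: ex_minnP => k' _ /(_ k); apply; apply/eqP.
have dpar v : v != r -> (d (par v) < d v)%N.
  move=> vr; have d0 : (0 < d v)%N.
    rewrite lt0n; apply/eqP => h; move: (dP v); rewrite h /= => h'.
    by rewrite h' eqxx in vr.
  rewrite -(prednK d0) ltnS; apply: dmin.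
  by rewrite -iterSr prednK // dP.
have dlt v : (d v < #|V|)%N.
  have key (i j : nat) : (i < j)%N -> (j <= d v)%N -> iter i par v != iter j par v.
    move=> ij jd; apply/eqP => h.
    have : iter (d v - j + i) par v = r.
      by rewrite iterD h -iterD subnK // dP.
    move/dmin; lia.
  pose f (i : 'I_(d v).+1) := iter i par v.
  have finj : injective f.
    move=> i j; rewrite /f => hij; apply/val_inj => /=.
    case: (ltngtP i j) => // h.
      by move: (key i j h); rewrite -ltnS ltn_ord hij eqxx => /(_ isT).
    by move: (key j i h); rewrite -ltnS ltn_ord hij eqxx => /(_ isT).
  by have := leq_card f finj; rewrite card_ord.
have dchild v w : w \in children r par v -> (d v < d w)%N.
  by rewrite inE => /andP[wr /eqP <-]; apply: dpar.
have mstab k v : (#|V| - d v <= k)%N -> m_aux r par isAct k v = m_aux r par isAct k.+1 v.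
  elim: k v => [|k IH] v hk.
    by have := dlt v; lia.
  rewrite [LHS]/= [RHS]/=.
  have e : forall w, w \in children r par v -> m_aux r par isAct k w = m_aux r par isAct k.+1 w.
    move=> w hw; apply: IH; have := dchild v w hw; lia.
  case: (isAct v).
    by congr (_ + _)%N; apply: eq_bigr => w /andP[hw _]; apply: e.
  by apply: eq_bigr => w hw; apply: e.
have mE v : m r par isAct v = if isAct v then
     (1 + \sum_(w in children r par v | infoset r par isAct w) m r par isAct w)%N
     else (\sum_(w in children r par v) m r par isAct w)%N.
  by rewrite /m mstab ?leq_subr.
have bstab k v : (d v < k)%N -> beta_aux r par isAct k v = beta_aux r par isAct k.+1 v.
  elim: k v => [|k IH] v hk //.
  rewrite [LHS]/= [RHS]/=; case: eqP => // /eqP vr.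
  by rewrite IH //; have := dpar v vr; lia.
have bE v : v != r -> beta r par isAct v = if isAct v then
     (m r par isAct v)%:R * beta r par isAct (par v)
     else beta r par isAct (par v) / (m r par isAct v)%:R.
  by move=> vr; rewrite /beta bstab ?dlt //= (negbTE vr).
have br : beta r par isAct r = 1.
  by rewrite /beta bstab ?dlt //= eqxx.
have childE v w : (w \in children r par v) = (w != r) && (par w == v).
  by rewrite inE.
have intpar w : w != r -> internal r par (par w).
  by move=> wr; apply/set0Pn; exists w; rewrite childE wr eqxx.
have actr a : isAct a -> a != r.
  by move=> ha; apply/eqP => e; move: hrinf; rewrite -e /infoset ha andbF.
have actpar a : isAct a -> infoset r par isAct (par a).
  move=> ha; rewrite /infoset intpar ?actr //=; apply/negP => hp.
  have := hactch _ hp a; rewrite childE actr // eqxx ha => /(_ isT).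
  done.
have infpar v : infoset r par isAct v -> v != r -> isAct (par v).
  move=> hv vr; apply/negPn/negP => hp.
  have hpi : infoset r par isAct (par v) by rewrite /infoset intpar.
  have [hs _] := hinf _ hpi.
  have := subsetP hs v; rewrite childE vr eqxx inE => /(_ isT) hav.
  by move: hv; rewrite /infoset hav andbF.
have infact v w : infoset r par isAct v -> w \in children r par v -> isAct w.
  by move=> hv hw; have [hs _] := hinf _ hv; have := subsetP hs w hw; rewrite inE.
have mr : m r par isAct r = #|actions isAct|.
  have e1 : (\sum_(v | infoset r par isAct v) m r par isAct v =
             \sum_(a | isAct a) m r par isAct a)%N.
    rewrite [RHS](partition_big par (infoset r par isAct)) //.
    apply: eq_bigr => v hv; rewrite mE /infoset.
    move: (hv); rewrite /infoset => /andP[_ /negbTE ->].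
    apply: eq_bigl => a; apply/idP/idP.
      by move=> ha; rewrite (infact v a hv ha) /=; move: ha; rewrite childE => /andP[].
    by case/andP => ha hpa; rewrite childE actr.
  have e2 : (\sum_(a | isAct a) m r par isAct a = #|actions isAct| +
             \sum_(v | infoset r par isAct v && (v != r)) m r par isAct v)%N.
    rewrite [X in (_ = _ + X)%N](partition_big par isAct); last first.
      by move=> v /andP[hv vr]; apply: infpar.
    rewrite cardsE -sum1_card -big_split /=.
    apply: eq_bigr => a ha; rewrite mE ha; congr (_ + _)%N.
    apply: eq_bigl => w; rewrite childE.
    by case: (w != r); case: (par w == a); case: (infoset _ _ _ w).
  have e3 : (\sum_(v | infoset r par isAct v) m r par isAct v =
             m r par isAct r + \sum_(v | infoset r par isAct v && (v != r)) m r par isAct v)%N.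
    by rewrite (bigD1 r).
  by move: e1 e2 e3 => ->->; lia.
set Vm := Vmu r par isAct mu.
have VmI S : env_closed r par isAct mu S -> Vm \subset S.
  by move=> hS; apply: bigcap_inf.
have Vr : r \in Vm by apply/bigcapP => S /and3P[].
have Vch v w : v \in Vm -> infoset r par isAct v -> w \in children r par v -> w \in Vm.
  move=> hv hiv hw; apply/bigcapP => S hS.
  have hvS := bigcapP hv S hS.
  case/and3P: hS => _ /forallP/(_ v)/implyP; rewrite hvS hiv => /(_ isT) /subsetP H.
  by move=> _; exact: H hw.
have Vmu_a a : a \in Vm -> isAct a -> mu a \in Vm.
  move=> hv ha; apply/bigcapP => S hS.
  have hvS := bigcapP hv S hS.
  by case/and3P: hS => _ _ /forallP/(_ a)/implyP; rewrite hvS ha => /(_ isT).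
have Vpar x : x \in Vm -> x != r -> (par x \in Vm) &&
     (infoset r par isAct (par x) || (isAct (par x) && (mu (par x) == x))).
  pose S' := [set x in Vm | (x == r) || ((par x \in Vm) &&
     (infoset r par isAct (par x) || (isAct (par x) && (mu (par x) == x))))].
  have hS' : env_closed r par isAct mu S'.
    apply/and3P; split.
    - by rewrite inE Vr eqxx.
    - apply/forallP => v; apply/implyP => /andP[]; rewrite inE => /andP[hv _] hiv.
      apply/subsetP => w hw; rewrite inE (Vch v w hv hiv hw) /=.
      by move: hw; rewrite childE => /andP[_ /eqP ->]; rewrite hv hiv orbT.
    - apply/forallP => a; apply/implyP => /andP[]; rewrite inE => /andP[hv _] ha.
      have hm := henv a ha; move: (hm); rewrite childE => /andP[_ /eqP hp].
      by rewrite inE Vmu_a //= hp hv ha eqxx !orbT.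
  move=> hx xr; have := subsetP (VmI _ hS') x hx.
  by rewrite inE hx (negbTE xr).
pose g x : rat := if isAct x then beta r par isAct x
                  else beta r par isAct x * (m r par isAct x)%:R.
have mpos v : infoset r par isAct v -> (0 < m r par isAct v)%N.
  move=> hv; have [_ hc] := hinf _ hv.
  have hne : children r par v != set0 by move: hv => /andP[].
  have /set0Pn [w hw] := hne.
  have hwa := infact v w hv hw.
  rewrite mE; move: (hv); rewrite /infoset => /andP[_ /negbTE ->].
  rewrite (bigD1 w) //= mE hwa; lia.
have e4 : \sum_(x | infoset r par isAct x && (x \in Vm)) g x =
          \sum_(x | isAct x && (x \in Vm)) g x.
  rewrite [RHS](partition_big par (fun v => infoset r par isAct v && (v \in Vm))); last first.
    move=> x /andP[hx hxv]; rewrite actpar //=.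
    by case/andP: (Vpar x hxv (actr x hx)).
  apply: eq_bigr => v /andP[hv hvV].
  rewrite /g; move: (hv); rewrite /infoset => /andP[_ /negbTE ->].
  rewrite mE; move: (hv); rewrite /infoset => /andP[_ /negbTE ->].
  rewrite natr_sum mulr_sumr.
  rewrite (eq_bigl (fun w => w \in children r par v)); last first.
    move=> b; apply/idP/idP.
      by case/andP => /andP[hb _] hpb; rewrite childE actr.
    by move=> hb; rewrite (infact v b hv hb) (Vch v b hvV hv hb) /=; move: hb; rewrite childE => /andP[].
  apply: eq_bigr => b hb; have hba := infact v b hv hb.
  rewrite ifT // (bE b) ?actr // hba; move: hb; rewrite childE => /andP[_ /eqP ->].
  by rewrite mulrC.
have e5 : \sum_(x | isAct x && (x \in Vm)) g x =
   \sum_(a in Zmu r par isAct mu) beta r par isAct a +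
   \sum_(x | isAct x && (x \in Vm)) (if leaf r par (mu x) then 0 else g x).
  have -> : \sum_(a in Zmu r par isAct mu) beta r par isAct a =
     \sum_(x | isAct x && (x \in Vm)) (if leaf r par (mu x) then g x else 0).
    rewrite big_mkcond [RHS]big_mkcond; apply: eq_bigr => x _.
    rewrite /Zmu inE /g.
    by case: (isAct x); case: (x \in Vm); case: (leaf _ _ _).
  rewrite -big_split /=; apply: eq_bigr => x _.
  by case: (leaf _ _ _); rewrite ?addr0 ?add0r.
have e7 : \sum_(x | isAct x && (x \in Vm)) (if leaf r par (mu x) then 0 else g x) =
   \sum_(v | (infoset r par isAct v && (v \in Vm)) && (v != r)) g v.
  rewrite [RHS](partition_big par (fun a => isAct a && (a \in Vm))); last first.
    move=> v /andP[/andP[hv hvV] vr]; rewrite infpar //=.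
    by case/andP: (Vpar v hvV vr).
  apply: eq_bigr => a /andP[ha haV].
  have hm := henv a ha.
  have hmr : mu a != r by move: hm; rewrite childE => /andP[].
  have hmp : par (mu a) = a by move: hm; rewrite childE => /andP[_ /eqP].
  have hmna := hactch a ha (mu a) hm.
  have hsel v : (infoset r par isAct v && (v \in Vm)) && (v != r) && (par v == a) ->
                v = mu a.
    case/andP => /andP[/andP[hv hvV] vr] /eqP hpv.
    case/andP: (Vpar v hvV vr); rewrite hpv => _.
    have -> : infoset r par isAct a = false by rewrite /infoset ha andbF.
    by move=> /andP[_ /eqP].
  case hl: (leaf r par (mu a)).
    rewrite big_pred0 // => v; apply/negP => hv.
    move: (hv) => /hsel ev; move: hv; rewrite ev.
    by rewrite /infoset /internal -/(leaf r par (mu a)) hl.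
  rewrite (big_pred1 (mu a)); last first.
    move=> v /=; apply/idP/idP; first by move/hsel => ->.
    move/eqP => ->; rewrite hmr hmp eqxx (Vmu_a a haV ha) /infoset /internal.
    by rewrite -/(leaf r par (mu a)) hl hmna.
  have hmi : infoset r par isAct (mu a).
    by rewrite /infoset /internal -/(leaf r par (mu a)) hl hmna.
  rewrite /g /= ha (negbTE hmna) (bE (mu a)) // (negbTE hmna) hmp.
  rewrite mulfVK //; rewrite pnatr_eq0 -lt0n; exact: mpos.
have e8 : \sum_(x | infoset r par isAct x && (x \in Vm)) g x =
   g r + \sum_(v | (infoset r par isAct v && (v \in Vm)) && (v != r)) g v.
  by rewrite (bigD1 r) //= hrinf Vr.
have : \sum_(a in Zmu r par isAct mu) beta r par isAct a = g r.
  by move: e8; rewrite e4 e5 e7 => /addIr.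
move=> ->; rewrite /g (negbTE (proj2 (andP hrinf))) br mr mul1r //.
Qed.
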